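(* Let $n,c,s,p$ and $n_1,\dots,n_c$ be positive integers with $n_1\ge 2p$, $n_1\ge n_2\ge\cdots\ge n_c\ge p$ and $n_1+n_2+\cdots+n_c=n-s$. Then $$\lambda_1\big(D(K_s\vee(K_{n_1}+K_{n_2}+\cdots+K_{n_c}))\big)\ge \lambda_1\big(D(K_s\vee(K_{n-s-p(c-1)}+(c-1)K_p))\big),$$ with equality if and only if $(n_1,n_2,\dots,n_c)=(n-s-p(c-1),p,\dots,p)$.
   Context: For a connected graph $G$, $D(G)$ is the distance matrix and $\lambda_1(D(G))$ its largest eigenvalue (distance spectral radius). $K_m$ is the complete graph on $m$ vertices, $+$ denotes disjoint union, $(c-1)K_p$ is $c-1$ disjoint copies of $K_p$, and $G_1\vee G_2$ is the join of $G_1$ and $G_2$ (disjoint union plus all edges between them). *)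

(* Defs.v *)
From HB Require Import structures.
From mathcomp Require Import all_boot all_order all_algebra.
From mathcomp Require Import boolp classical_sets reals.
Set Implicit Arguments. Unset Strict Implicit. Unset Printing Implicit Defensive.
Import Order.TTheory GRing.Theory Num.Theory.

Fixpoint within (T : finType) (adj : rel T) (k : nat) (x y : T) : bool :=
  match k with
  | 0 => x == y
  | k'.+1 => (x == y) || [exists z, adj x z && within adj k' z y]
  end.

(* Graph distance: least k with y reachable from x within k steps
   (for a connected graph on #|T| vertices this is attained below #|T|). *)
Definition gdist (T : finType) (adj : rel T) (x y : T) : nat :=
  find (fun k => within adj k x y) (iota 0 #|T|).

Definition dist_matrix (R : pzRingType) (T : finType) (adj : rel T) : 'M[R]_#|T| :=
  \matrix_(i, j) ((gdist adj (enum_val i) (enum_val j))%:R)%R.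

(* Largest eigenvalue lambda_1 of a square real matrix (chosen by
   classical choice among the largest eigenvalues; 0 if none exists). *)
Definition lambda1 (R : realType) (N : nat) (A : 'M[R]_N) : R :=
  xget 0%R [set l : R | eigenvalue A l /\ (forall m : R, eigenvalue A m -> m <= l)%R].

(* Vertex type of K_s \/ (K_{ns 0} + ... + K_{ns (c-1)}):
   inl i : vertex of K_s ;  inr (existT i j) : j-th vertex of the i-th clique. *)
Definition jvert (s c : nat) (ns : nat -> nat) : finType :=
  ('I_s + {i : 'I_c & 'I_(ns i)})%type.

Definition jadj (s c : nat) (ns : nat -> nat) : rel (jvert s c ns) :=
  fun u v => (u != v) &&
    match u, v with
    | inl _, _ => true
    | _, inl _ => true
    | inr (existT i _), inr (existT i' _) => i == i'
    end.

Definition Djoin (R : pzRingType) (s c : nat) (ns : nat -> nat) :=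
  @dist_matrix R (jvert s c ns) (@jadj s c ns).

(* Main.v *)
Require Import Defs.
From HB Require Import structures.
From mathcomp Require Import all_boot all_order all_algebra.
From mathcomp Require Import boolp classical_sets reals.
From mathcomp Require Import ring lra zify.
Import Order.TTheory GRing.Theory Num.Theory.
Set Implicit Arguments. Unset Strict Implicit. Unset Printing Implicit Defensive.

Definition blk s c ns (x : jvert s c ns) : option 'I_c :=
  match x with inl _ => None | inr u => Some (tag u) end.
Definition jrel s c ns (x y : jvert s c ns) : bool :=
  [|| blk x == None, blk y == None | blk x == blk y].
Definition dd s c ns (x y : jvert s c ns) : nat :=
  if x == y then 0 else if jrel x y then 1 else 2.

Lemma jadjE s c ns (x y : jvert s c ns) : jadj x y = (x != y) && jrel x y.
Proof. by case: x => [a|[i a]]; case: y => [b|[j b]]. Qed.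

Lemma jrelC s c ns (x y : jvert s c ns) : jrel x y = jrel y x.
Proof. by rewrite /jrel; case: (blk x) => [a|]; case: (blk y) => [b|] //=; rewrite eq_sym. Qed.

Lemma jrelxx s c ns (x : jvert s c ns) : jrel x x.
Proof. by rewrite /jrel eqxx !orbT. Qed.

Lemma within1 (T : finType) (adj : rel T) x y :
  within adj 1 x y = (x == y) || adj x y.
Proof.
rewrite /=; congr (_ || _); apply/existsP/idP => [[z /andP[a /eqP<-]]//|a].
by exists y; rewrite a eqxx.
Qed.

Lemma card_ge_uniq (T : finType) (l : seq T) : uniq l -> (size l <= #|T|)%N.
Proof. by move/card_uniqP <-; apply: max_card. Qed.

Lemma gdistE s c ns (Hs : (0 < s)%N) (x y : jvert s c ns) :
  gdist (@jadj s c ns) x y = dd x y.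
Proof.
rewrite /gdist /dd.
case: eqP => [<-|/eqP nxy].
  have : (0 < #|jvert s c ns|)%N by apply/card_gt0P; exists x.
  by case: #|_| => //= m _; rewrite eqxx.
have H2 : (2 <= #|jvert s c ns|)%N.
  by apply: (card_ge_uniq (l := [:: x; y])); rewrite /= inE nxy.
case: ifP => rxy.
  move: H2; case: #|_| => [|[|m]] //= _.
  rewrite (negbTE nxy) /=.
  have -> // : [exists z, jadj x z && (z == y)].
  by apply/existsP; exists y; rewrite eqxx andbT jadjE nxy rxy.
have H3 : (3 <= #|jvert s c ns|)%N.
  apply: (card_ge_uniq (l := [:: x; y; inl (Ordinal Hs)])).
  move: nxy rxy; case: x => [a|[i a]]; case: y => [b|[j b]] //=.
  by rewrite !inE negb_or => ->.
move: H3; case: #|_| => [|[|[|m]]] //= _.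
rewrite (negbTE nxy) /=.
have -> : [exists z, jadj x z && (z == y)] = false.
  apply/existsP => [[z /andP[a /eqP zy]]]; move: a; rewrite zy jadjE rxy andbF //.
rewrite /=.
have -> // : [exists z, jadj x z && within (@jadj s c ns) 1 z y].
  apply/existsP; exists (inl (Ordinal Hs)).
  by move: nxy rxy; case: x => [a|[i a]]; case: y => [b|[j b]]; rewrite within1.
Qed.

Local Open Scope ring_scope.

Lemma DjoinE (R : realType) s c ns (Hs : (0 < s)%N) i j :
  Djoin R s c ns i j = (dd (enum_val i) (enum_val j))%:R.
Proof. by rewrite /Djoin /dist_matrix mxE gdistE. Qed.

Lemma sum_enum (R : realType) (T : finType) (F : T -> R) :
  \sum_(i < #|T|) F (enum_val i) = \sum_x F x.
Proof.
rewrite (reindex (@enum_rank T)) /=; last by apply: onW_bij; apply: enum_rank_bij.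
by apply: eq_bigr => x _; rewrite enum_rankK.
Qed.

Lemma eig_funP (R : realType) s c ns (Hs : (0 < s)%N) (l : R) :
  eigenvalue (Djoin R s c ns) l <->
  exists2 f : jvert s c ns -> R, (exists x, f x != 0) &
    forall y, \sum_x f x * (dd x y)%:R = l * f y.
Proof.
split.
  move/eigenvalueP => [v vE vn0].
  exists (fun x => v 0 (enum_rank x)).
    case: (boolP [exists j, v 0 j != 0]) => [/existsP[j vj]|/existsPn H].
      by exists (enum_val j); rewrite enum_valK.
    exfalso; move/negP: vn0; apply; apply/eqP/rowP => j; rewrite mxE.
    by apply/eqP; have := H j; rewrite negbK.
  move=> y; move/rowP: vE => /(_ (enum_rank y)).
  rewrite !mxE => <-.
  rewrite -(sum_enum (fun x => v 0 (enum_rank x) * (dd x y)%:R)).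
  rewrite [RHS](eq_bigr (fun i => v 0 i * (dd (enum_val i) y)%:R)); last by move=> i _; rewrite DjoinE // enum_rankK.
  by apply: eq_bigr => i _; rewrite enum_valK.
move=> [f [x fx] fE]; apply/eigenvalueP.
exists (\row_j f (enum_val j)).
  apply/rowP => j; rewrite !mxE -fE -(sum_enum (fun x => f x * (dd x (enum_val j))%:R)).
  rewrite [LHS](eq_bigr (fun i => f (enum_val i) * (dd (enum_val i) (enum_val j))%:R)) // => i _; by rewrite mxE DjoinE.
apply/eqP => /rowP /(_ (enum_rank x)); rewrite !mxE enum_rankK => fx0.
by rewrite fx0 eqxx in fx.
Qed.

Lemma sum_dd (R : realType) s c ns (f : jvert s c ns -> R) y :
  \sum_x f x * (dd x y)%:R = 2 * \sum_x f x - f y - \sum_(x | jrel y x) f x.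
Proof.
apply/eqP; rewrite eq_sym !subr_eq.
have -> : f y = \sum_x (if x == y then f x else 0) by rewrite -big_mkcond big_pred1_eq.
rewrite (big_mkcond (fun x => jrel y x)) -!big_split mulr_sumr /=; apply/eqP.
apply: eq_bigr => x _; rewrite /dd.
case: eqP => [->|nxy]; first by rewrite jrelxx; ring.
by rewrite [jrel y x]jrelC; case: (jrel x y); ring.
Qed.

Lemma card_none s c ns : #|[pred x : jvert s c ns | blk x == None]| = s.
Proof.
have inj : injective (fun a : 'I_s => (inl a : jvert s c ns)) by move=> a b [].
rewrite -[RHS]card_ord -cardsT -(card_imset _ inj).
apply: eq_card => -[a|[j b]]; rewrite !inE /=.
  by rewrite imset_f // inE.
by apply/esym/imsetP => -[a _].
Qed.

Lemma card_some s c ns i : #|[pred x : jvert s c ns | blk x == Some i]| = ns i.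
Proof.
pose g := fun a : 'I_(ns i) => (inr (Tagged (fun i : 'I_c => 'I_(ns i)) a) : jvert s c ns).
have inj : injective g.
  move=> a b H.
  have := congr1 (fun z : jvert s c ns => if z is inr u then u else Tagged (fun i : 'I_c => 'I_(ns i)) a) H.
  by move=> /= H'; exact: (eq_from_Tagged H').
rewrite -[RHS]card_ord -cardsT -(card_imset _ inj).
apply: eq_card => -[a|[j b]]; rewrite !inE /=.
  by apply/esym/imsetP => -[a' _].
case: (eqVneq j i) => [ji|nji].
  subst j; rewrite eqxx; apply/esym/imsetP; exists b => //; by rewrite inE.
have -> : (Some j == Some i) = false by apply/negbTE; rewrite /eq_op /= nji.
apply/esym/imsetP => -[a' _ E].
have := congr1 (@blk s c ns) E => /= [[]] /eqP; by rewrite (negbTE nji).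
Qed.

Definition Xs (R : realType) s c ns (f : jvert s c ns -> R) :=
  \sum_(x | blk x == None) f x.
Definition Ys (R : realType) s c ns (f : jvert s c ns -> R) (i : 'I_c) :=
  \sum_(x | blk x == Some i) f x.

Lemma sum_const_none (R : realType) s c ns (a : R) :
  \sum_(x : jvert s c ns | blk x == None) a = s%:R * a.
Proof.
rewrite (eq_bigl (fun x => x \in [pred x : jvert s c ns | blk x == None])) //.
by rewrite sumr_const card_none mulr_natl.
Qed.

Lemma sum_const_some (R : realType) s c ns i (a : R) :
  \sum_(x : jvert s c ns | blk x == Some i) a = (ns i)%:R * a.
Proof.
rewrite (eq_bigl (fun x => x \in [pred x : jvert s c ns | blk x == Some i])) //.
by rewrite sumr_const card_some mulr_natl.
Qed.

Lemma sum_all (R : realType) s c ns (f : jvert s c ns -> R) :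
  \sum_x f x = Xs f + \sum_i Ys f i.
Proof.
rewrite /Xs /Ys (big_mkcond (fun x => blk x == None)).
have -> : \sum_i \sum_(x | blk x == Some i) f x = \sum_i \sum_x (if blk x == Some i then f x else 0).
  by apply: eq_bigr => i _; rewrite big_mkcond.
rewrite (exchange_big) -big_split /=; apply: eq_bigr => x _.
case E: (blk x) => [j|] /=.
  rewrite add0r (bigD1 j) //= eqxx big1 ?addr0 // => i nij.
  by case: eqP => // -[] /eqP; rewrite eq_sym (negbTE nij).
by rewrite big1 ?addr0.
Qed.

Lemma rel_none (R : realType) s c ns (f : jvert s c ns -> R) y :
  blk y = None -> \sum_(x | jrel y x) f x = \sum_x f x.
Proof. by move=> E; apply: eq_bigl => x; rewrite /jrel E. Qed.

Lemma rel_some (R : realType) s c ns (f : jvert s c ns -> R) y i :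
  blk y = Some i -> \sum_(x | jrel y x) f x = Xs f + Ys f i.
Proof.
move=> E; rewrite /Xs /Ys !(big_mkcond (fun x => blk x == _)) -big_split big_mkcond /=.
apply: eq_bigr => x _; rewrite /jrel E /=.
by case: (blk x) => [j|] //=; rewrite ?add0r ?addr0 // [Some i == _]eq_sym; case: (_ == _).
Qed.

Definition hh (R : realType) c (a : 'I_c -> R) (m : R) := \sum_i a i / (m + a i).
Definition isroot (R : realType) (s : R) (h : R -> R) (m : R) :=
  s < m /\ m - s = (2 * m - s) * h m.

Lemma hh_ge0 (R : realType) c (a : 'I_c -> R) m :
  (forall i, 0 < a i) -> 0 < m -> 0 <= hh a m.
Proof.
move=> ap mp; apply: sumr_ge0 => i _; apply: divr_ge0; first exact: ltW.
by apply: ltW; apply: ltr_wpDr => //; apply: ltW.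
Qed.

Lemma hh_gt0 (R : realType) c (a : 'I_c -> R) m :
  (0 < c)%N -> (forall i, 0 < a i) -> 0 < m -> 0 < hh a m.
Proof.
move=> c0 ap mp; rewrite /hh (bigD1 (Ordinal c0)) //=.
apply: ltr_wpDr; first by apply: sumr_ge0 => i _; apply: divr_ge0; [apply: ltW|apply: ltW; apply: ltr_wpDr; [apply: ltW|]].
by apply: divr_gt0 => //; apply: ltr_wpDr => //; apply: ltW.
Qed.

Lemma hh_mono (R : realType) c (a : 'I_c -> R) x y :
  (forall i, 0 < a i) -> 0 < x -> x <= y -> hh a y <= hh a x.
Proof.
move=> ap xp xy; apply: ler_sum => i _.
have ai := ap i.
rewrite ler_pdivrMr; last by lra.
rewrite mulrAC ler_pdivlMr; last by lra.
by rewrite ler_pM2l //; lra.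
Qed.

Lemma root_cmp (R : realType) (s : R) (h1 h2 : R -> R) m1 m2 :
  0 < s -> isroot s h1 m1 -> isroot s h2 m2 ->
  (forall x y, s < x -> x <= y -> h2 y <= h2 x) ->
  h1 m1 <= h2 m1 -> m1 <= m2.
Proof.
move=> s0 [l1 e1] [l2 e2] mono h12.
rewrite leNgt; apply/negP => lt21.
have h22 := mono _ _ l2 (ltW lt21).
set t := h2 m2 in e2 h22.
have A : m1 - s <= (2 * m1 - s) * t.
  rewrite e1; apply: ler_wpM2l; [lra|exact: le_trans h12 h22].
have P : 0 <= 2 * m2 - s by lra.
have B := ler_wpM2r P A.
have C : (2 * m1 - s) * t * (2 * m2 - s) = (2 * m1 - s) * (m2 - s) by rewrite e2; ring.
rewrite C in B.
have D : s * m2 < s * m1 by rewrite ltr_pM2l.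
nra.
Qed.

Lemma root_cmp_strict (R : realType) (s : R) (h1 h2 : R -> R) m1 m2 :
  0 < s -> isroot s h1 m1 -> isroot s h2 m2 ->
  (forall x y, s < x -> x <= y -> h2 y <= h2 x) ->
  h1 m1 < h2 m1 -> m1 < m2.
Proof.
move=> s0 [l1 e1] [l2 e2] mono h12.
rewrite ltNge; apply/negP => le21.
have h22 := mono _ _ l2 le21.
set t := h2 m2 in e2 h22.
have A : m1 - s < (2 * m1 - s) * t.
  rewrite e1 ltr_pM2l; [exact: lt_le_trans h12 h22|lra].
have P : 0 < 2 * m2 - s by lra.
have B : (m1 - s) * (2 * m2 - s) < (2 * m1 - s) * t * (2 * m2 - s) by rewrite ltr_pM2r.
have C : (2 * m1 - s) * t * (2 * m2 - s) = (2 * m1 - s) * (m2 - s) by rewrite e2; ring.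
rewrite C in B.
have D : s * m2 <= s * m1 by rewrite ler_pM2l.
nra.
Qed.

Lemma root_unique (R : realType) (s : R) (h : R -> R) m1 m2 :
  0 < s -> isroot s h m1 -> isroot s h m2 ->
  (forall x y, s < x -> x <= y -> h y <= h x) -> m1 = m2.
Proof.
move=> s0 r1 r2 mono; apply/le_anti/andP; split.
  exact: (root_cmp s0 r1 r2 mono).
exact: (root_cmp s0 r2 r1 mono).
Qed.

Definition Qp (R : realType) c (a : 'I_c -> R) (s : R) : {poly R} :=
  ('X - s%:P) * \prod_i ('X + (a i)%:P) -
  (2%:P * 'X - s%:P) * \sum_i ((a i)%:P * \prod_(j | j != i) ('X + (a j)%:P)).

Lemma QpE (R : realType) c (a : 'I_c -> R) (s x : R) :
  (forall i, 0 < a i) -> 0 < x ->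
  (Qp a s).[x] = (\prod_i (x + a i)) * ((x - s) - (2 * x - s) * hh a x).
Proof.
move=> ap xp.
rewrite /Qp hornerD hornerN !hornerM horner_prod horner_sum !hornerE.
have E1 : \prod_i ('X + (a i)%:P).[x] = \prod_i (x + a i).
  by apply: eq_bigr => i _; rewrite !hornerE.
have E2 : \sum_i ((a i)%:P * \prod_(j | j != i) ('X + (a j)%:P)).[x] =
          \prod_i (x + a i) * hh a x.
  rewrite /hh mulr_sumr; apply: eq_bigr => i _.
  rewrite hornerM horner_prod hornerC [in RHS](bigD1 i) //=.
  have -> : \prod_(j | j != i) ('X + (a j)%:P).[x] = \prod_(j | j != i) (x + a j).
    by apply: eq_bigr => j _; rewrite !hornerE.
  have := ap i => api.
  field; apply/eqP; lra.
rewrite E1 E2; ring.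
Qed.

Lemma prod_pos (R : realType) c (a : 'I_c -> R) x :
  (forall i, 0 < a i) -> 0 < x -> 0 < \prod_i (x + a i).
Proof. by move=> ap xp; apply: prodr_gt0 => i _; have := ap i; lra. Qed.

Lemma hh_le (R : realType) c (a : 'I_c -> R) m :
  (forall i, 0 < a i) -> 0 < m -> hh a m <= (\sum_i a i) / m.
Proof.
move=> ap mp; rewrite /hh mulr_suml; apply: ler_sum => i _.
have := ap i => ai.
apply: ler_wpM2l; first lra.
by rewrite lef_pV2 ?posrE; lra.
Qed.

Lemma root_exists (R : realType) c (a : 'I_c -> R) (s : R) :
  (0 < c)%N -> (forall i, 0 < a i) -> 0 < s -> exists m, isroot s (hh a) m.
Proof.
move=> c0 ap s0.
set N := \sum_i a i.
have N0 : 0 <= N by apply: sumr_ge0 => i _; apply: ltW.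
set M := s + 2 * N + 1.
have M0 : 0 < M by rewrite /M; lra.
have Qs : (Qp a s).[s] < 0.
  rewrite QpE // pmulr_rlt0; last exact: prod_pos.
  have := hh_gt0 c0 ap s0; nra.
have QM : 0 <= (Qp a s).[M].
  rewrite QpE //; apply: mulr_ge0; first exact/ltW/prod_pos.
  have h1 := hh_le ap M0.
  have h0 := hh_ge0 ap M0.
  have h2 : M * hh a M <= N by rewrite mulrC -ler_pdivlMr.
  rewrite subr_ge0; rewrite /M in h2 h0 *; nra.
have sM : s <= M by rewrite /M; lra.
have QsM : (Qp a s).[s] <= 0 <= (Qp a s).[M] by rewrite QM ltW.
have [x /andP[sx xM] rx] := poly_ivt sM QsM.
have xs : s < x.
  rewrite lt_neqAle sx andbT; apply/eqP => E.
  by move: rx; rewrite /root -E lt_eqF.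
exists x; split => //.
have x0 : 0 < x by lra.
move: rx; rewrite /root QpE // mulf_eq0 => /orP[/eqP P0|/eqP E].
  by have := prod_pos ap x0; rewrite P0 ltxx.
by apply/eqP; rewrite -subr_eq0 E.
Qed.

Lemma eig_eq (R : realType) s c ns (f : jvert s c ns -> R) (l : R) y :
  \sum_x f x * (dd x y)%:R = l * f y ->
  (l + 1) * f y = 2 * \sum_x f x - \sum_(x | jrel y x) f x.
Proof. by rewrite sum_dd => E; rewrite mulrDl -E; ring. Qed.

Lemma eig_le (R : realType) (s c : nat) (ns : nat -> nat) (l m : R) :
  (0 < s)%N -> (forall i : 'I_c, (0 < ns i)%N) ->
  isroot s%:R (hh (fun i : 'I_c => (ns i)%:R)) m ->
  eigenvalue (Djoin R s c ns) l -> l <= m - 1.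
Proof.
move=> s0 np rm /(eig_funP _ _ s0) [f [x0 fx0] fE].
have ap : forall i : 'I_c, 0 < ((ns i)%:R : R) by move=> i; rewrite ltr0n.
have sR : 0 < (s%:R : R) by rewrite ltr0n.
set mu := l + 1.
case: (lerP mu s%:R) => [mus|smu].
  by case: rm => sm _; rewrite /mu in mus; lra.
suff rmu : isroot s%:R (hh (fun i : 'I_c => (ns i)%:R)) mu.
  have emu : mu = m by apply: (root_unique sR rmu rm) => x y sx xy; apply: hh_mono => //; lra.
  by rewrite /mu in emu; lra.
split => //.
set T := \sum_x f x.
set X := Xs f.
have eN : forall y, blk y = None -> mu * f y = T.
  move=> y E; rewrite /mu (eig_eq (fE y)) (rel_none _ E); rewrite /T; ring.
have eS : forall y i, blk y = Some i -> mu * f y = 2 * T - X - Ys f i.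
  move=> y i E; rewrite /mu (eig_eq (fE y)) (rel_some _ E) /T /X; ring.
have eX : mu * X = s%:R * T.
  rewrite /X /Xs mulr_sumr -(@sum_const_none R s c ns); apply: eq_bigr => y /eqP; exact: eN.
have eY : forall i, mu * Ys f i = (ns i)%:R * (2 * T - X - Ys f i).
  move=> i; rewrite /Ys mulr_sumr -(@sum_const_some R s c ns i); apply: eq_bigr => y /eqP; exact: eS.
have eT : T = X + \sum_i Ys f i by rewrite /T sum_all.
have mu0 : 0 < mu by lra.
case: (eqVneq T 0) => [T0|Tn0].
  exfalso.
  have X0 : X = 0.
    by apply/eqP; move: eX; rewrite T0 mulr0 => /eqP; rewrite mulf_eq0 gt_eqF.
  have Y0 : forall i, Ys f i = 0.
    move=> i; have := eY i; rewrite T0 X0 => e.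
    have := ap i => ai.
    have : (mu + (ns i)%:R) * Ys f i = 0 by rewrite mulrDl e; ring.
    by move/eqP; rewrite mulf_eq0 => /orP[/eqP|/eqP] //; lra.
  move: fx0; case E: (blk x0) => [i|].
    have := eS _ _ E; rewrite T0 X0 Y0 => e.
    have : mu * f x0 == 0 by rewrite e; apply/eqP; ring.
    by rewrite mulf_eq0 gt_eqF //= => ->.
  have := eN _ E; rewrite T0 => e.
  have : mu * f x0 == 0 by rewrite e.
  by rewrite mulf_eq0 gt_eqF //= => ->.
have eY' : forall i, Ys f i = (ns i)%:R * (2 * T - X) / (mu + (ns i)%:R).
  move=> i; have := eY i => e; have := ap i => ai.
  have nz : mu + (ns i)%:R != 0 by apply: lt0r_neq0; lra.
  apply: (mulIf nz); rewrite divfK //.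
  rewrite mulrDr [Ys f i * mu]mulrC e; ring.
have eSY : \sum_i Ys f i = (2 * T - X) * hh (fun i : 'I_c => (ns i)%:R) mu.
  rewrite /hh mulr_sumr; apply: eq_bigr => i _; rewrite eY'; ring.
set h := hh _ mu in eSY *.
have key : T * (mu - s%:R - (2 * mu - s%:R) * h) =
   mu * (T - X - (2 * T - X) * h) + (mu * X - s%:R * T) * (1 - h) by ring.
have e1 : T - X - (2 * T - X) * h = 0 by rewrite {1}eT eSY; ring.
have e2 : mu * X - s%:R * T = 0 by rewrite eX subrr.
rewrite e1 e2 mulr0 mul0r addr0 in key.
move/eqP: key; rewrite mulf_eq0 (negbTE Tn0) /= subr_eq0 => /eqP.
by move=> ->; ring.
Qed.

Lemma eig_root (R : realType) (s c : nat) (ns : nat -> nat) (m : R) :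
  (0 < s)%N -> (forall i : 'I_c, (0 < ns i)%N) ->
  isroot s%:R (hh (fun i : 'I_c => (ns i)%:R)) m ->
  eigenvalue (Djoin R s c ns) (m - 1).
Proof.
move=> s0 np [sm em].
have ap : forall i : 'I_c, 0 < ((ns i)%:R : R) by move=> i; rewrite ltr0n.
have sR : 0 < (s%:R : R) by rewrite ltr0n.
have m0 : 0 < m by lra.
have mn : m != 0 by apply: lt0r_neq0.
pose Yc (i : 'I_c) : R := (ns i)%:R * (2 - s%:R / m) / (m + (ns i)%:R).
pose f (x : jvert s c ns) : R :=
  match blk x with None => m^-1 | Some i => (2 - s%:R / m - Yc i) / m end.
apply/(eig_funP _ _ s0); exists f.
  by exists (inl (Ordinal s0)); rewrite /f /= invr_eq0.
have fX : Xs f = s%:R / m.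
  rewrite /Xs (eq_bigr (fun _ => m^-1)); first by rewrite sum_const_none.
  by move=> x /eqP; rewrite /f => ->.
have fY : forall i, Ys f i = Yc i.
  move=> i; rewrite /Ys (eq_bigr (fun _ => (2 - s%:R / m - Yc i) / m)).
    rewrite sum_const_some /Yc; have := ap i => ai.
    have nz : m + (ns i)%:R != 0 by apply: lt0r_neq0; lra.
    by field; rewrite mn nz.
  by move=> x /eqP; rewrite /f => ->.
have fT : \sum_x f x = 1.
  rewrite sum_all fX (eq_bigr _ (fun i _ => fY i)).
  have -> : \sum_i Yc i = (2 - s%:R / m) * hh (fun i : 'I_c => (ns i)%:R) m.
    by rewrite /hh mulr_sumr; apply: eq_bigr => i _; rewrite /Yc; ring.
  have -> : (2 - s%:R / m) * hh (fun i : 'I_c => (ns i)%:R) m =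
     ((2 * m - s%:R) * hh (fun i : 'I_c => (ns i)%:R) m) / m by field.
  by rewrite -em; field.
move=> y; rewrite sum_dd fT.
case E: (blk y) => [i|].
  by rewrite (rel_some _ E) fX fY /f E; field.
by rewrite (rel_none _ E) fT /f E; field.
Qed.

Lemma lambda1_root (R : realType) (s c : nat) (ns : nat -> nat) (m : R) :
  (0 < s)%N -> (forall i : 'I_c, (0 < ns i)%N) ->
  isroot s%:R (hh (fun i : 'I_c => (ns i)%:R)) m ->
  lambda1 (Djoin R s c ns) = m - 1.
Proof.
move=> s0 np rm; apply: xget_unique.
  split; first exact: eig_root.
  by move=> l; apply: eig_le.
move=> y [ey my]; apply/le_anti/andP; split; first exact: (eig_le s0 np rm ey).
by apply: my; apply: eig_root.
Qed.

Definition phi (R : realType) (mu t : R) := t / (mu + t).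

Lemma two_pt_id (R : realType) (mu p a b : R) :
  0 < mu -> 0 < p -> p <= a -> p <= b ->
  phi mu a + phi mu b - phi mu (a + b - p) - phi mu p =
  mu * (a - p) * (b - p) * (2 * (mu + p) + (a - p) + (b - p)) /
  ((mu + p) * (mu + a) * (mu + b) * (mu + (a + b - p))).
Proof.
move=> m0 p0 pa pb; rewrite /phi.
have n1 : mu + a != 0 by apply: lt0r_neq0; lra.
have n2 : mu + b != 0 by apply: lt0r_neq0; lra.
have n3 : mu + p != 0 by apply: lt0r_neq0; lra.
have n4 : mu + (a + b - p) != 0 by apply: lt0r_neq0; lra.
by field; rewrite n1 n2 n3 n4.
Qed.

Lemma two_pt (R : realType) (mu p a b : R) :
  0 < mu -> 0 < p -> p <= a -> p <= b ->
  phi mu (a + b - p) + phi mu p <= phi mu a + phi mu b.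
Proof.
move=> m0 p0 pa pb; rewrite -subr_ge0 opprD addrA two_pt_id //.
apply: divr_ge0; last by apply: ltW; repeat apply: mulr_gt0; lra.
repeat apply: mulr_ge0; lra.
Qed.

Lemma two_pt_strict (R : realType) (mu p a b : R) :
  0 < mu -> 0 < p -> p < a -> p < b ->
  phi mu (a + b - p) + phi mu p < phi mu a + phi mu b.
Proof.
move=> m0 p0 pa pb; rewrite -subr_gt0 opprD addrA two_pt_id //; try lra.
apply: divr_gt0; repeat apply: mulr_gt0; lra.
Qed.

Lemma sum_ge_lo (R : realType) (p : R) (a : nat -> R) c :
  (forall i, (i <= c)%N -> p <= a i) ->
  a 0%N + c%:R * p <= \sum_(i < c.+1) a i.
Proof.
move=> ap; rewrite big_ord_recl /= lerD2l.
have -> : c%:R * p = \sum_(i < c) p by rewrite sumr_const card_ord mulr_natl.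
by apply: ler_sum => i _; apply: ap.
Qed.

Lemma major (R : realType) (mu p : R) (a : nat -> R) c :
  0 < mu -> 0 < p -> (forall i, (i <= c)%N -> p <= a i) ->
  phi mu (\sum_(i < c.+1) a i - c%:R * p) + c%:R * phi mu p <=
  \sum_(i < c.+1) phi mu (a i).
Proof.
move=> m0 p0; elim: c => [|c IH] ap.
  by rewrite !big_ord1 mul0r subr0 mul0r addr0.
have IH' := IH (fun i ic => ap i (leqW ic)).
have lo := sum_ge_lo (fun i ic => ap i (leqW ic)).
have a0 := ap 0%N isT.
have ac := ap c.+1 (leqnn _).
rewrite big_ord_recr [in X in _ <= X]big_ord_recr /=.
set A := \sum_(i < c.+1) a i - c%:R * p in IH' *.
have -> : \sum_(i < c.+1) a i + a c.+1 - c.+1%:R * p = A + a c.+1 - p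
  by rewrite /A -addn1 natrD; ring.
have hA : p <= A by rewrite /A; lra.
have := two_pt m0 p0 hA ac.
rewrite -natr1 mulrDl mul1r; lra.
Qed.

Lemma major_strict (R : realType) (mu p : R) (a : nat -> R) c :
  0 < mu -> 0 < p -> (forall i, (i <= c)%N -> p <= a i) ->
  p < a 0%N -> (exists i, (0 < i <= c)%N /\ p < a i) ->
  phi mu (\sum_(i < c.+1) a i - c%:R * p) + c%:R * phi mu p <
  \sum_(i < c.+1) phi mu (a i).
Proof.
move=> m0 p0; elim: c => [|c IH] ap pa0 [j [jc pj]].
  by move: jc; case: j {pj} => //.
have lo := sum_ge_lo (fun i ic => ap i (leqW ic)).
have ac := ap c.+1 (leqnn _).
rewrite big_ord_recr [in X in _ < X]big_ord_recr /=.
set A := \sum_(i < c.+1) a i - c%:R * p.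
have -> : \sum_(i < c.+1) a i + a c.+1 - c.+1%:R * p = A + a c.+1 - p
  by rewrite /A -addn1 natrD; ring.
have hA : a 0%N <= A by rewrite /A; lra.
case: (ltnP j c.+1) => jc1.
  have IH' := IH (fun i ic => ap i (leqW ic)) pa0.
  have : exists i, (0 < i <= c)%N /\ p < a i.
    by exists j; split => //; case/andP: jc => -> _.
  move/IH' => IHs.
  have := two_pt m0 p0 (le_trans (ltW pa0) hA) ac.
  rewrite /A in IHs; rewrite -natr1 mulrDl mul1r; lra.
have ej : j = c.+1 by apply/eqP; rewrite eqn_leq jc1; case/andP: jc => _ ->.
subst j.
have IH' := major m0 p0 (fun i ic => ap i (leqW ic)).
have := two_pt_strict m0 p0 (lt_le_trans pa0 hA) pj.
rewrite /A in IH'; rewrite -natr1 mulrDl mul1r; lra.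
Qed.

Lemma mono_ge (ns : nat -> nat) c :
  (forall i, (i.+1 < c)%N -> (ns i.+1 <= ns i)%N) ->
  forall i, (i < c)%N -> (ns c.-1 <= ns i)%N.
Proof.
move=> Hm i ic.
suff H : forall k j, (j + k = c.-1)%N -> (ns c.-1 <= ns j)%N.
  by apply: (H (c.-1 - i)%N); lia.
elim=> [|k IH] j e; first by rewrite -e addn0.
apply: leq_trans (IH j.+1 _) _; first by rewrite addSnnS.
apply: Hm; lia.
Qed.

Unset Implicit Arguments.

Theorem lemma3p1 (R : realType) (n c s p : nat) (ns : nat -> nat) :
  (0 < n)%N -> (0 < c)%N -> (0 < s)%N -> (0 < p)%N ->
  (forall i, (i < c)%N -> (0 < ns i)%N) ->
  (2 * p <= ns 0)%N ->
  (forall i, (i.+1 < c)%N -> (ns i.+1 <= ns i)%N) ->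
  (p <= ns c.-1)%N ->
  (\sum_(i < c) ns i)%N = (n - s)%N ->
  let ns' := fun i : nat => if i == 0%N then (n - s - p * (c - 1))%N else p in
  (lambda1 (Djoin R s c ns') <= lambda1 (Djoin R s c ns))%R /\
  (lambda1 (Djoin R s c ns) = lambda1 (Djoin R s c ns') <->
     (forall i, (i < c)%N -> ns i = ns' i)).
Proof.
move=> n0 c0 s0 p0 npos h2p hmono hlast hsum.
have hge : forall i, (i < c)%N -> (p <= ns i)%N.
  by move=> i ic; apply: leq_trans hlast (mono_ge hmono ic).
case: c c0 npos hmono hlast hsum hge => [//|c'] _ npos hmono hlast hsum hge ns'.
have Sge : (ns 0 + c' * p <= \sum_(i < c'.+1) ns i)%N.
  rewrite big_ord_recl leq_add2l -{1}[c']card_ord -sum_nat_const.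
  by apply: leq_sum => i _; apply: hge; rewrite /= ltnS.
have e0 : ns' 0%N = (n - s - p * c')%N by rewrite /ns' subn1.
have npos' : forall i : 'I_c'.+1, (0 < ns' i)%N.
  move=> i; rewrite /ns'; case: eqP => // _; lia.
have npos2 : forall i : 'I_c'.+1, (0 < ns i)%N by move=> i; apply: npos.
pose a := fun i : 'I_c'.+1 => ((ns i)%:R : R).
pose a' := fun i : 'I_c'.+1 => ((ns' i)%:R : R).
have ap : forall i, (0 < a i)%R by move=> i; rewrite /a ltr0n.
have ap' : forall i, (0 < a' i)%R by move=> i; rewrite /a' ltr0n.
have sR : (0 < (s%:R : R))%R by rewrite ltr0n.
have [m rm] := root_exists (isT : (0 < c'.+1)%N) ap sR.
have [m' rm'] := root_exists (isT : (0 < c'.+1)%N) ap' sR.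
have L := lambda1_root s0 npos2 rm.
have L' := lambda1_root s0 npos' rm'.
rewrite L L'.
have monoh : forall x y, (s%:R < x)%R -> (x <= y)%R -> (hh a y <= hh a x)%R.
  by move=> x y sx xy; apply: hh_mono => //; lra.
have ha' : forall mu, hh a' mu =
    (phi mu (\sum_(i < c'.+1) ((ns i)%:R : R) - c'%:R * p%:R) + c'%:R * phi mu p%:R)%R.
  move=> mu; rewrite /hh big_ord_recl.
  have -> : \sum_(i < c') a' (lift ord0 i) / (mu + a' (lift ord0 i)) = (c'%:R * phi mu p%:R)%R.
    by rewrite /a' /ns' /= big_const_ord iter_addr_0 [RHS]mulr_natl.
  congr (_ + _)%R; rewrite /phi /a' e0 -natr_sum hsum.
  have le : (p * c' <= n - s)%N by rewrite -hsum; lia.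
  by rewrite natrB // natrM [(p%:R * _)%R]mulrC.
have hcmp : forall mu, (0 < mu)%R -> (hh a' mu <= hh a mu)%R.
  move=> mu mu0; rewrite ha'.
  apply: (major (a := fun i => (ns i)%:R)) => //; first by rewrite ltr0n.
  by move=> i ic; rewrite ler_nat; apply: hge.
have mm : (m' <= m)%R.
  apply: (root_cmp sR rm' rm monoh); apply: hcmp; case: rm' => ? _; lra.
split; first lra.
split.
  move=> emm.
  have em : m = m' by lra.
  case: (boolP [exists i : 'I_c'.+1, (0 < i)%N && (p < ns i)%N]) => [/existsP[j /andP[j0 pj]]|/existsPn nj].
    exfalso.
    have : (m' < m)%R.
      apply: (root_cmp_strict sR rm' rm monoh).
      rewrite ha'; apply: (major_strict (a := fun i => (ns i)%:R)).
      - by case: rm' => ? _; lra.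
      - by rewrite ltr0n.
      - by move=> i ic; rewrite ler_nat; apply: hge.
      - by rewrite ltr_nat; lia.
      - by exists j; split; [rewrite j0 /= -ltnS|rewrite ltr_nat].
    lra.
  have eqp : forall i, (0 < i < c'.+1)%N -> ns i = p.
    move=> i /andP[i0 ic]; have := nj (Ordinal ic); rewrite /= i0 /= -leqNgt => le.
    by apply/eqP; rewrite eqn_leq le hge.
  move=> i ic; rewrite /ns'; case: eqP => [->|/eqP i0].
    have : (\sum_(i < c'.+1) ns i = ns 0 + c' * p)%N.
      rewrite big_ord_recl; congr (_ + _)%N.
      rewrite (eq_bigr (fun _ => p)) => [|j _]; last by apply: eqp; rewrite /= ltnS ltn_ord.
      by rewrite big_const_ord iter_addn_0 mulnC.
    rewrite hsum subn1 /= => ->; lia.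
  by apply: eqp; rewrite ic lt0n i0.
move=> eqs.
have eh : forall mu, hh a mu = hh a' mu.
  by move=> mu; apply: eq_bigr => i _; rewrite /a /a' eqs.
have rm2 : isroot s%:R (hh a) m' by rewrite /isroot eh.
by rewrite (root_unique sR rm rm2 monoh).
Qed.
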